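(* For every finite set $C$ of level constraints and every level substitution $\theta$: $\theta \vDash C$ if and only if $\theta \vDash \widehat{C}$, where $\widehat{C}$ is obtained by applying the constraint-normalization procedure (described in the context) to every constraint of $C$.
   Context: Level expressions: $l ::= i \mid \mathtt{z} \mid \mathtt{s}\,l \mid l \sqcup l'$, with $i$ in an infinite set $\mathcal{I}$ of level variables equipped with a total order $<$. $\simeq$ is the smallest congruence on level expressions (closed under the constructors and under substitution of levels for level variables) containing $i_1 \sqcup (i_2 \sqcup i_3) \approx (i_1 \sqcup i_2) \sqcup i_3$, $i_1 \sqcup i_2 \approx i_2 \sqcup i_1$, $\mathtt{s}(i_1 \sqcup i_2) \approx \mathtt{s}\,i_1 \sqcup \mathtt{s}\,i_2$, $i \sqcup \mathtt{s}\,i \approx \mathtt{s}\,i$, $i \sqcup \mathtt{z} \approx i$, $i \sqcup i \approx i$. $\mathtt{s}^k l$ is $k$-fold application of $\mathtt{s}$. For a strictly increasing sequence $V = i_1, \dots, i_k$ of level variables and levels $l_{i}$, $\sqcup_{i \in V} l_i$ denotes $l_{i_1} \sqcup (l_{i_2} \sqcup \dots (l_{i_{k-1}} \sqcup l_{i_k})\dots)$. A level is in normal form if it has the form $\mathtt{s}^k\,\mathtt{z} \sqcup (\sqcup_{i \in V} \mathtt{s}^{n_i}\,i)$ with $n_i \le k$ for all $i \in V$; every level $l$ has a unique normal form $\hat{l}$ with $l \simeq \hat{l}$. A constraint is a pair $l_1 = l_2$; for a level substitution $\theta$ and a set of constraints $C$, $\theta \vDash C$ means $l_1\theta \simeq l_2\theta$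 for all $l_1 = l_2 \in C$. The normalization procedure on a constraint $l_1 = l_2$: first replace $l_1, l_2$ by $\hat{l_1}, \hat{l_2}$, written $l_p = \mathtt{s}^{k_p}\,\mathtt{z} \sqcup (\sqcup_{i \in V_p} \mathtt{s}^{n^p_i}\,i)$ for $p = 1,2$; then for each $i \in V_1 \cap V_2$: if $n^1_i < n^2_i$ remove the summand $\mathtt{s}^{n^1_i}\,i$ from $l_1$, and if $n^1_i > n^2_i$ remove the summand $\mathtt{s}^{n^2_i}\,i$ from $l_2$; finally subtract the minimum of the set $\{k_1, k_2\} \cup \{n^1_i\}_{i \in V_1} \cup \{n^2_i\}_{i \in V_2}$ (for the current $V_1, V_2$) from all these exponents. *)

(* Defs.v *)
From Stdlib Require Import Arith List.
Import ListNotations.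

Inductive level : Type :=
| LVar : nat -> level
| LZ : level
| LS : level -> level
| LMax : level -> level -> level.

Fixpoint lsubst (th : nat -> level) (l : level) : level :=
  match l with
  | LVar i => th i
  | LZ => LZ
  | LS l => LS (lsubst th l)
  | LMax l1 l2 => LMax (lsubst th l1) (lsubst th l2)
  end.

Inductive lequiv : level -> level -> Prop :=
| leq_refl l : lequiv l l
| leq_sym l1 l2 : lequiv l1 l2 -> lequiv l2 l1
| leq_trans l1 l2 l3 : lequiv l1 l2 -> lequiv l2 l3 -> lequiv l1 l3
| leq_S l1 l2 : lequiv l1 l2 -> lequiv (LS l1) (LS l2)
| leq_Max l1 l2 l1' l2' : lequiv l1 l1' -> lequiv l2 l2' ->
    lequiv (LMax l1 l2) (LMax l1' l2')
| leq_subst (th : nat -> level) l1 l2 : lequiv l1 l2 ->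
    lequiv (lsubst th l1) (lsubst th l2)
| ax_assoc i1 i2 i3 :
    lequiv (LMax (LVar i1) (LMax (LVar i2) (LVar i3)))
           (LMax (LMax (LVar i1) (LVar i2)) (LVar i3))
| ax_comm i1 i2 : lequiv (LMax (LVar i1) (LVar i2)) (LMax (LVar i2) (LVar i1))
| ax_Sdist i1 i2 :
    lequiv (LS (LMax (LVar i1) (LVar i2))) (LMax (LS (LVar i1)) (LS (LVar i2)))
| ax_Sabs i : lequiv (LMax (LVar i) (LS (LVar i))) (LS (LVar i))
| ax_zero i : lequiv (LMax (LVar i) LZ) (LVar i)
| ax_idem i : lequiv (LMax (LVar i) (LVar i)) (LVar i).

Notation "l1 ≃ l2" := (lequiv l1 l2) (at level 70).

Fixpoint sk (k : nat) (l : level) : level :=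
  match k with 0 => l | S k' => LS (sk k' l) end.

(* Representation of a normal form  s^k z ⊔ (⊔_{i∈V} s^{n_i} i):
   the pair (k, [(i_1,n_1);...;(i_m,n_m)]) with i_1 < ... < i_m. *)
Definition nfrep := (nat * list (nat * nat))%type.

Fixpoint join_vars (V : list (nat * nat)) : level :=
  match V with
  | [] => LZ (* unused: only called on non-empty lists *)
  | [(i, n)] => sk n (LVar i)
  | (i, n) :: V' => LMax (sk n (LVar i)) (join_vars V')
  end.

Definition rep_to_level (r : nfrep) : level :=
  match snd r with
  | [] => sk (fst r) LZ
  | V => LMax (sk (fst r) LZ) (join_vars V)
  end.

Fixpoint insert_max (i n : nat) (V : list (nat * nat)) : list (nat * nat) :=
  match V with
  | [] => [(i, n)]
  | (j, m) :: V' =>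
      if i <? j then (i, n) :: V
      else if i =? j then (j, Nat.max n m) :: V'
      else (j, m) :: insert_max i n V'
  end.

Fixpoint merge_max (V W : list (nat * nat)) : list (nat * nat) :=
  match V with
  | [] => W
  | (i, n) :: V' => insert_max i n (merge_max V' W)
  end.

Fixpoint nf_raw (l : level) : nfrep :=
  match l with
  | LVar i => (0, [(i, 0)])
  | LZ => (0, [])
  | LS l' => let (k, V) := nf_raw l' in
             (S k, map (fun p => (fst p, S (snd p))) V)
  | LMax l1 l2 => let (k1, V1) := nf_raw l1 in let (k2, V2) := nf_raw l2 in
                  (Nat.max k1 k2, merge_max V1 V2)
  end.

(* the normal form \hat l (as a representation): the constant part is
   raised so that n_i <= k for all i in V *)
Definition nf (l : level) : nfrep :=
  let (k, V) := nf_raw l in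
  (fold_right (fun p acc => Nat.max (snd p) acc) k V, V).

Definition lhat (l : level) : level := rep_to_level (nf l).

Definition constraint := (level * level)%type.

Definition sat (th : nat -> level) (C : list constraint) : Prop :=
  forall c, In c C -> lsubst th (fst c) ≃ lsubst th (snd c).

Definition lookup (i : nat) (V : list (nat * nat)) : option nat :=
  match find (fun p => fst p =? i) V with
  | Some p => Some (snd p)
  | None => None
  end.

Definition drop_dominated (V W : list (nat * nat)) : list (nat * nat) :=
  filter (fun p => match lookup (fst p) W with
                   | Some m => negb (snd p <? m)
                   | None => true
                   end) V.

Definition norm_constraint (c : constraint) : constraint :=
  let (k1, V1) := nf (fst c) in
  let (k2, V2) := nf (snd c) in
  let V1' := drop_dominated V1 V2 in
  let V2' := drop_dominated V2 V1 in
  let m := fold_right (fun p acc => Nat.min (snd p) acc)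
             (fold_right (fun p acc => Nat.min (snd p) acc) (Nat.min k1 k2) V1')
             V2' in
  let sub := map (fun p => (fst p, snd p - m)) in
  (rep_to_level (k1 - m, sub V1'), rep_to_level (k2 - m, sub V2')).

Definition norm_constraints (C : list constraint) : list constraint :=
  map norm_constraint C.

(* Main.v *)
Require Import Defs.
From Stdlib Require Import List Arith Lia Setoid Morphisms.
Import ListNotations.

Fixpoint ev (s : nat -> nat) (l : level) : nat :=
  match l with
  | LVar i => s i
  | LZ => 0
  | LS l => S (ev s l)
  | LMax a b => Nat.max (ev s a) (ev s b)
  end.

Lemma ev_sk s n l : ev s (sk n l) = n + ev s l.
Proof. induction n; simpl; lia. Qed.

Lemma ev_subst s th l : ev s (lsubst th l) = ev (fun i => ev s (th i)) l.
Proof. induction l; simpl; auto. Qed.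

Lemma sound a b : a ≃ b -> forall s, ev s a = ev s b.
Proof.
  induction 1; intro s; simpl; rewrite ?ev_subst; try lia;
  try (rewrite IHlequiv1, ?IHlequiv2; reflexivity);
  try (rewrite IHlequiv; reflexivity).
Qed.

#[export] Instance leq_equiv : Equivalence lequiv.
Proof. split; red; intros; eauto using leq_refl, leq_sym, leq_trans. Qed.
#[export] Instance LS_proper : Proper (lequiv ==> lequiv) LS.
Proof. repeat intro; apply leq_S; auto. Qed.
#[export] Instance LMax_proper : Proper (lequiv ==> lequiv ==> lequiv) LMax.
Proof. repeat intro; apply leq_Max; auto. Qed.

Definition th3 (x y z : level) : nat -> level :=
  fun i => match i with 0 => x | 1 => y | _ => z end.

Lemma g_assoc x y z : LMax x (LMax y z) ≃ LMax (LMax x y) z.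
Proof. exact (leq_subst (th3 x y z) _ _ (ax_assoc 0 1 2)). Qed.
Lemma g_comm x y : LMax x y ≃ LMax y x.
Proof. exact (leq_subst (th3 x y x) _ _ (ax_comm 0 1)). Qed.
Lemma g_Sdist x y : LS (LMax x y) ≃ LMax (LS x) (LS y).
Proof. exact (leq_subst (th3 x y x) _ _ (ax_Sdist 0 1)). Qed.
Lemma g_Sabs x : LMax x (LS x) ≃ LS x.
Proof. exact (leq_subst (th3 x x x) _ _ (ax_Sabs 0)). Qed.
Lemma g_zero x : LMax x LZ ≃ x.
Proof. exact (leq_subst (th3 x x x) _ _ (ax_zero 0)). Qed.
Lemma g_idem x : LMax x x ≃ x.
Proof. exact (leq_subst (th3 x x x) _ _ (ax_idem 0)). Qed.
Lemma g_zero_l x : LMax LZ x ≃ x.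
Proof. rewrite g_comm; apply g_zero. Qed.

Lemma swap4 a b c d : LMax (LMax a b) (LMax c d) ≃ LMax (LMax a c) (LMax b d).
Proof.
  rewrite <- g_assoc. rewrite (g_assoc b c d). rewrite (g_comm b c).
  rewrite <- (g_assoc c b d). rewrite g_assoc. reflexivity.
Qed.

#[export] Instance sk_proper n : Proper (lequiv ==> lequiv) (sk n).
Proof. induction n; repeat intro; simpl; auto. rewrite (IHn _ _ H). reflexivity. Qed.

Lemma sk_dist n a b : sk n (LMax a b) ≃ LMax (sk n a) (sk n b).
Proof. induction n; simpl. reflexivity. rewrite IHn, g_Sdist. reflexivity. Qed.

Lemma absd d x : LMax x (sk d x) ≃ sk d x.
Proof.
  induction d; simpl. apply g_idem.
  transitivity (LMax x (LS (LMax x (sk d x)))).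
  - rewrite IHd; reflexivity.
  - rewrite g_Sdist. rewrite g_assoc. rewrite g_Sabs. rewrite <- g_Sdist.
    rewrite IHd. reflexivity.
Qed.

Lemma sk_add n d x : sk (n + d) x = sk n (sk d x).
Proof. induction n; simpl; congruence. Qed.

Lemma sk_le n m x : n <= m -> LMax (sk n x) (sk m x) ≃ sk m x.
Proof.
  intro H. replace m with (n + (m - n)) by lia. rewrite sk_add.
  rewrite <- sk_dist, absd. reflexivity.
Qed.

Lemma sk_max a b x : LMax (sk a x) (sk b x) ≃ sk (Nat.max a b) x.
Proof.
  destruct (le_ge_dec a b).
  - rewrite Nat.max_r by lia; apply sk_le; auto.
  - rewrite g_comm, Nat.max_l by lia; apply sk_le; auto.
Qed.

Definition omax (o1 o2 : option nat) : option nat :=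
  match o1, o2 with
  | Some a, Some b => Some (Nat.max a b)
  | Some a, None => Some a
  | None, o => o
  end.

Fixpoint repk l := match l with
  | LVar _ => 0 | LZ => 0 | LS l => S (repk l) | LMax a b => Nat.max (repk a) (repk b) end.
Fixpoint repf l : nat -> option nat := match l with
  | LVar j => fun i => if i =? j then Some 0 else None
  | LZ => fun _ => None
  | LS l => fun i => option_map S (repf l i)
  | LMax a b => fun i => omax (repf a i) (repf b i) end.
Definition tm (o : option nat) i := match o with Some n => sk n (LVar i) | None => LZ end.
Fixpoint J N (f : nat -> option nat) := match N with
  | 0 => LZ | S N' => LMax (J N' f) (tm (f N') N') end.
Definition Lv N k f := LMax (sk k LZ) (J N f).
Fixpoint maxvar l := match l with
  | LVar i => i | LZ => 0 | LS l => maxvar l | LMax a b => Nat.max (maxvar a) (maxvar b) end.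

Lemma J_none N f : (forall i, i < N -> f i = None) -> J N f ≃ LZ.
Proof.
  induction N; simpl; intros. reflexivity.
  rewrite H by lia. rewrite IHN by (intros; apply H; lia). apply g_idem.
Qed.

Lemma J_var N j : j < N -> J N (fun i => if i =? j then Some 0 else None) ≃ LVar j.
Proof.
  induction N; intros; [lia|]. simpl.
  destruct (Nat.eqb_spec N j).
  - subst. rewrite J_none. apply g_zero_l.
    intros i Hi. destruct (Nat.eqb_spec i j); [lia|auto].
  - rewrite IHN by lia. apply g_zero.
Qed.

Lemma J_max N f g : LMax (J N f) (J N g) ≃ J N (fun i => omax (f i) (g i)).
Proof.
  induction N; simpl. apply g_idem. rewrite swap4, IHN.
  apply LMax_proper; [reflexivity|].
  destruct (f N), (g N); simpl. apply sk_max. apply g_zero. apply g_zero_l. apply g_idem.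
Qed.

Lemma J_S N f : LS (J N f) ≃ LMax (LS LZ) (J N (fun i => option_map S (f i))).
Proof.
  induction N; simpl. symmetry; apply g_zero.
  rewrite g_Sdist, IHN. destruct (f N); simpl.
  - symmetry; apply g_assoc.
  - rewrite g_zero. rewrite g_comm, g_assoc, g_idem. reflexivity.
Qed.

Lemma rep_ok l N : maxvar l < N -> l ≃ Lv N (repk l) (repf l).
Proof.
  revert N; induction l; simpl; intros N HN; unfold Lv.
  - simpl. rewrite J_var by lia. symmetry; apply g_zero_l.
  - rewrite J_none by auto. simpl. symmetry; apply g_idem.
  - transitivity (LS (Lv N (repk l) (repf l))). rewrite <- IHl; auto. reflexivity.
    unfold Lv. rewrite g_Sdist, J_S. rewrite g_assoc.
    apply LMax_proper; [|reflexivity].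
    change (LMax (sk (S (repk l)) LZ) (sk 1 LZ) ≃ sk (S (repk l)) LZ).
    rewrite sk_max. replace (Nat.max (S (repk l)) 1) with (S (repk l)) by lia. reflexivity.
  - transitivity (LMax (Lv N (repk l1) (repf l1)) (Lv N (repk l2) (repf l2))).
    apply LMax_proper; [apply IHl1|apply IHl2]; lia.
    unfold Lv. rewrite swap4, J_max, sk_max. reflexivity.
Qed.

Fixpoint MJ N (f : nat -> option nat) := match N with
  | 0 => 0 | S N' => Nat.max (MJ N' f) (match f N' with Some n => n | None => 0 end) end.

Lemma J_absorb N f : J N f ≃ LMax (sk (MJ N f) LZ) (J N f).
Proof.
  induction N; simpl. symmetry; apply g_idem.
  destruct (f N) as [n|]; simpl.
  - rewrite <- sk_max. rewrite swap4. rewrite <- IHN.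
    apply LMax_proper; [reflexivity|]. rewrite <- sk_dist, g_zero_l. reflexivity.
  - rewrite Nat.max_0_r. rewrite g_assoc, <- IHN. reflexivity.
Qed.

Lemma Lv_norm N k f : Lv N k f ≃ Lv N (Nat.max k (MJ N f)) f.
Proof.
  unfold Lv. rewrite <- sk_max, <- g_assoc, <- J_absorb. reflexivity.
Qed.

Lemma ev_J N f : ev (fun _ => 0) (J N f) = MJ N f.
Proof.
  induction N; simpl; auto. rewrite IHN. destruct (f N); simpl; rewrite ?ev_sk; simpl; lia.
Qed.

Lemma canon l N : maxvar l < N -> l ≃ Lv N (ev (fun _ => 0) l) (repf l).
Proof.
  intro H. pose proof (rep_ok l N H) as E.
  pose proof (sound _ _ E (fun _ => 0)) as E0.
  unfold Lv in E0. simpl in E0. rewrite ev_sk, ev_J in E0. simpl in E0.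
  rewrite E0, Nat.add_0_r. transitivity (Lv N (repk l) (repf l)); [exact E|].
  apply Lv_norm.
Qed.

Definition up i M := fun j => if j =? i then M else 0.

Lemma char l i : match repf l i with
  | None => forall M, ev (up i M) l = ev (fun _ => 0) l
  | Some n => forall M, ev (fun _ => 0) l <= M -> ev (up i M) l = n + M end.
Proof.
  induction l; simpl.
  - unfold up. destruct (Nat.eqb_spec i n).
    + subst. intros M _. rewrite Nat.eqb_refl; lia.
    + intros M. destruct (Nat.eqb_spec n i); [congruence|reflexivity].
  - auto.
  - destruct (repf l i); simpl; intros.
    + rewrite IHl; lia.
    + rewrite IHl; auto.
  - destruct (repf l1 i), (repf l2 i); simpl in *; intros;
      rewrite ?IHl1, ?IHl2 by lia; lia.
Qed.

Lemma J_ext N f g : (forall i, f i = g i) -> J N f = J N g.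
Proof. intro H; induction N; simpl; auto. rewrite IHN, H; auto. Qed.

Lemma complete a b : (forall s, ev s a = ev s b) -> a ≃ b.
Proof.
  intro H.
  set (N := S (Nat.max (maxvar a) (maxvar b))).
  transitivity (Lv N (ev (fun _ => 0) a) (repf a)). apply canon; unfold N; lia.
  transitivity (Lv N (ev (fun _ => 0) b) (repf b)). 2: symmetry; apply canon; unfold N; lia.
  rewrite (H (fun _ => 0)). unfold Lv. erewrite J_ext. reflexivity.
  intro i. pose proof (char a i) as Ca. pose proof (char b i) as Cb.
  pose proof (H (fun _ => 0)) as H0.
  destruct (repf a i) as [n|], (repf b i) as [m|]; auto.
  - specialize (Ca (ev (fun _ => 0) a) (le_n _)).
    specialize (Cb (ev (fun _ => 0) a) ltac:(lia)).
    rewrite H in Ca. f_equal. lia.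
  - specialize (Ca (S (ev (fun _ => 0) a)) ltac:(lia)).
    specialize (Cb (S (ev (fun _ => 0) a))). rewrite H in Ca. lia.
  - specialize (Cb (S (ev (fun _ => 0) a)) ltac:(lia)).
    specialize (Ca (S (ev (fun _ => 0) a))). rewrite H in Ca. lia.
Qed.

Lemma lequiv_iff a b : a ≃ b <-> forall s, ev s a = ev s b.
Proof. split; [apply sound|apply complete]. Qed.

Definition E (s : nat -> nat) (V : list (nat * nat)) :=
  fold_right (fun p acc => Nat.max (snd p + s (fst p)) acc) 0 V.

Lemma E_cons s p V : E s (p :: V) = Nat.max (snd p + s (fst p)) (E s V).
Proof. reflexivity. Qed.

Lemma ev_join s V : V <> [] -> ev s (join_vars V) = E s V.
Proof.
  induction V as [|[i n] V IH]; [congruence|]. intros _.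
  destruct V as [|q V'].
  - simpl. rewrite ev_sk. simpl. lia.
  - destruct q as [j m].
    change (ev s (LMax (sk n (LVar i)) (join_vars ((j,m) :: V'))) = E s ((i, n) :: (j,m) :: V')).
    cbn [ev]. rewrite ev_sk. rewrite IH by discriminate. simpl. lia.
Qed.

Lemma ev_rep s k V : ev s (rep_to_level (k, V)) = Nat.max k (E s V).
Proof.
  unfold rep_to_level; simpl. destruct V as [|p V].
  - rewrite ev_sk. simpl. lia.
  - change (ev s (LMax (sk k LZ) (join_vars (p :: V))) = Nat.max k (E s (p :: V))).
    cbn [ev]. rewrite ev_sk, ev_join by discriminate. simpl. lia.
Qed.

Lemma E_ins s i n V : E s (insert_max i n V) = Nat.max (n + s i) (E s V).
Proof.
  induction V as [|[j m] V IH]; simpl. lia.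
  destruct (Nat.ltb_spec i j); simpl. lia.
  destruct (Nat.eqb_spec i j); simpl. subst; lia.
  rewrite IH; lia.
Qed.

Lemma E_merge s V W : E s (merge_max V W) = Nat.max (E s V) (E s W).
Proof.
  induction V as [|[i n] V IH]; simpl. lia. rewrite E_ins, IH. simpl. lia.
Qed.

Lemma E_mapS s k V : Nat.max (S k) (E s (map (fun p => (fst p, S (snd p))) V))
  = S (Nat.max k (E s V)).
Proof. induction V as [|p V IH]. simpl; lia. rewrite map_cons, !E_cons. cbn [fst snd]. lia. Qed.

Lemma ev_nf_raw s l : ev s l = Nat.max (fst (nf_raw l)) (E s (snd (nf_raw l))).
Proof.
  induction l; simpl.
  - lia.
  - lia.
  - destruct (nf_raw l) as [k V]. simpl in *. rewrite IHl. symmetry. apply E_mapS.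
  - destruct (nf_raw l1) as [k1 V1], (nf_raw l2) as [k2 V2]. simpl in *.
    rewrite E_merge. lia.
Qed.

Lemma F_max s k V :
  Nat.max (fold_right (fun p acc => Nat.max (snd p) acc) k V) (E s V) = Nat.max k (E s V).
Proof. induction V as [|p V IH]; simpl in *; lia. Qed.

Lemma ev_nf s l : ev s l = Nat.max (fst (nf l)) (E s (snd (nf l))).
Proof.
  unfold nf. rewrite ev_nf_raw. destruct (nf_raw l) as [k V]. simpl. rewrite F_max. auto.
Qed.

Lemma E_filter s (f : nat * nat -> bool) V :
  E s V = Nat.max (E s (filter f V)) (E s (filter (fun x => negb (f x)) V)).
Proof. induction V as [|p V IH]; simpl. lia. destruct (f p); simpl; lia. Qed.

Lemma E_lt s L B : (forall x, In x L -> snd x + s (fst x) < B) -> E s L = 0 \/ E s L < B.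
Proof.
  induction L as [|p L IH]; intros H. auto.
  right. assert (Hp := H p (or_introl eq_refl)).
  destruct IH as [H1|H1]; [intros; apply H; simpl; auto| |]; rewrite E_cons; lia.
Qed.

Lemma E_in s p V : In p V -> snd p + s (fst p) <= E s V.
Proof.
  induction V as [|q V IH]; intros H; [destruct H|]. rewrite E_cons.
  destruct H as [<-|H]; [lia| specialize (IH H); lia].
Qed.

Lemma dropped_lt s V W : E s (filter (fun x => negb (match lookup (fst x) W with
                   | Some m => negb (snd x <? m)
                   | None => true
                   end)) V) = 0 \/
   E s (filter (fun x => negb (match lookup (fst x) W with
                   | Some m => negb (snd x <? m)
                   | None => true
                   end)) V) < E s W.
Proof.
  apply E_lt. intros x Hx. apply filter_In in Hx as [_ Hx].
  destruct (lookup (fst x) W) as [m|] eqn:HL; [|discriminate].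
  rewrite Bool.negb_involutive in Hx. apply Nat.ltb_lt in Hx.
  unfold lookup in HL. destruct (find (fun p => fst p =? fst x) W) as [p|] eqn:HF; [|discriminate].
  injection HL as <-. apply find_some in HF as [Hin Heq]. apply Nat.eqb_eq in Heq.
  pose proof (E_in s p W Hin). rewrite Heq in *. lia.
Qed.

Lemma E_sub s k m V : m <= k -> (forall x, In x V -> m <= snd x) ->
  Nat.max (k - m) (E s (map (fun p => (fst p, snd p - m)) V)) + m = Nat.max k (E s V).
Proof.
  intros Hk. induction V as [|p V IH]; intros H. simpl; lia.
  rewrite map_cons, !E_cons. cbn [fst snd].
  assert (H1 := H p (or_introl eq_refl)).
  assert (IH' := IH (fun x Hx => H x (or_intror Hx))). lia.
Qed.

Lemma fmin_le b V : fold_right (fun (p : nat * nat) acc => Nat.min (snd p) acc) b V <= b /\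
  forall x, In x V -> fold_right (fun (p : nat * nat) acc => Nat.min (snd p) acc) b V <= snd x.
Proof.
  induction V as [|p V [IH1 IH2]]; simpl. split; [lia|tauto].
  split. lia. intros x [<-|Hx]. lia. specialize (IH2 x Hx). lia.
Qed.

Lemma arith k1 k2 e1 e2 d1 d2 m x1 x2 :
  (d1 = 0 \/ d1 < Nat.max e2 d2) -> (d2 = 0 \/ d2 < Nat.max e1 d1) ->
  x1 + m = Nat.max k1 e1 -> x2 + m = Nat.max k2 e2 ->
  (Nat.max k1 (Nat.max e1 d1) = Nat.max k2 (Nat.max e2 d2) <-> x1 = x2).
Proof. lia. Qed.

Lemma norm_pointwise s c :
  ev s (fst c) = ev s (snd c) <-> ev s (fst (norm_constraint c)) = ev s (snd (norm_constraint c)).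
Proof.
  destruct c as [a b]. unfold norm_constraint. simpl.
  rewrite (ev_nf s a), (ev_nf s b).
  destruct (nf a) as [k1 V1], (nf b) as [k2 V2]. simpl.
  rewrite !ev_rep.
  pose proof (dropped_lt s V1 V2) as D1. pose proof (dropped_lt s V2 V1) as D2.
  rewrite (E_filter s (fun x => match lookup (fst x) V2 with
                   | Some m => negb (snd x <? m) | None => true end) V1).
  rewrite (E_filter s (fun x => match lookup (fst x) V1 with
                   | Some m => negb (snd x <? m) | None => true end) V2).
  rewrite (E_filter s (fun x => match lookup (fst x) V2 with
                   | Some m => negb (snd x <? m) | None => true end) V1) in D2.
  rewrite (E_filter s (fun x => match lookup (fst x) V1 with
                   | Some m => negb (snd x <? m) | None => true end) V2) in D1.
  fold (drop_dominated V1 V2) in *. fold (drop_dominated V2 V1) in *.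
  set (V1' := drop_dominated V1 V2) in *. set (V2' := drop_dominated V2 V1) in *.
  set (m := fold_right _ (fold_right _ (Nat.min k1 k2) V1') V2').
  destruct (fmin_le (fold_right (fun (p : nat * nat) acc => Nat.min (snd p) acc) (Nat.min k1 k2) V1') V2') as [M1 M2].
  destruct (fmin_le (Nat.min k1 k2) V1') as [M3 M4].
  fold m in M1, M2.
  assert (HS1 := E_sub s k1 m V1' ltac:(lia) ltac:(intros x Hx; specialize (M4 x Hx); lia)).
  assert (HS2 := E_sub s k2 m V2' ltac:(lia) ltac:(intros x Hx; specialize (M2 x Hx); lia)).
  eapply arith; eassumption.
Qed.

Theorem mainTheorem6 (C : list constraint) (th : nat -> level) :
  sat th C <-> sat th (norm_constraints C).
Proof.
  unfold sat, norm_constraints. split.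
  - intros H c' Hc'. apply in_map_iff in Hc' as [c [<- Hc]].
    specialize (H c Hc). rewrite lequiv_iff in *. intro s.
    rewrite !ev_subst. apply (proj1 (norm_pointwise _ c)). rewrite <- !ev_subst. auto.
  - intros H c Hc. specialize (H (norm_constraint c) (in_map _ _ _ Hc)).
    rewrite lequiv_iff in *. intro s.
    rewrite !ev_subst. apply (proj2 (norm_pointwise _ c)). rewrite <- !ev_subst. auto.
Qed.
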